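(* Let $m \ge 2$, let $\varepsilon \le \frac{1}{2^{3m}\cdot 4m}$ be a power of 2, and let $\mathcal{G} = \{2^{-i}\varepsilon j : i \in \mathbb{Z},\ j \in \{1,\dots,2/\varepsilon^2 - 1\}\} \cap (0,1)$. Then for any $0 < q < 1$ there exists $z \in \mathcal{G}$ with $1.5\varepsilon q \le q - z \le 2\varepsilon z$. *)

(* Defs.v *)
From HB Require Import structures.
From mathcomp Require Import all_boot all_order all_algebra.
From mathcomp Require Import reals.
Set Implicit Arguments. Unset Strict Implicit. Unset Printing Implicit Defensive.
Import Order.TTheory GRing.Theory Num.Theory.
Local Open Scope ring_scope.

Definition is_pow2 (R : realType) (eps : R) : Prop :=
  exists k : int, eps = 2 ^ k.

Definition in_grid (R : realType) (eps z : R) : Prop :=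
  (exists (i : int) (j : nat),
      (1 <= j)%N /\ (j%:R : R) <= 2 / eps ^+ 2 - 1 /\ z = 2 ^ (- i) * eps * j%:R)
  /\ 0 < z < 1.

(* Main.v *)
Require Import Defs.
From HB Require Import structures.
From mathcomp Require Import all_boot all_order all_algebra.
From mathcomp Require Import reals.
From mathcomp Require Import ring lra zify.
Import Order.TTheory GRing.Theory Num.Theory.
Local Open Scope ring_scope.

Theorem claim12 (R : realType) (m : nat) (eps : R) :
  (2 <= m)%N ->
  eps <= (2 ^+ (3 * m) * (4 * m)%:R)^-1 ->
  is_pow2 eps ->
  forall q : R, 0 < q < 1 ->
  exists z : R, in_grid eps z /\ 3 / 2 * eps * q <= q - z /\ q - z <= 2 * eps * z.
Proof.
move=> hm heps [k hk] q /andP[q0 q1].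
have e0 : 0 < eps by rewrite hk exprz_gt0.
have e1 : eps <= 1 / 56.
  apply: (le_trans heps); rewrite mul1r -natrX -natrM lef_pV2 ?posrE ?ltr0n //.
    rewrite ler_nat.
    have h1 : (7 <= 2 ^ (3 * m))%N.
      apply: leq_trans (ltn_expl _ _) => //; lia.
    have h2 : (8 <= 4 * m)%N by lia.
    by have := leq_mul h1 h2.
  rewrite muln_gt0 expn_gt0 /=; lia.
pose P := fun n : nat => ((2 : R) ^+ n)^-1 <= q / 4.
have exP : exists n, P n.
  exists (Num.trunc (4 / q)).+1; rewrite /P.
  have hq4 : 0 < q / 4 by rewrite divr_gt0.
  rewrite -[q / 4]invrK lef_pV2 ?posrE ?exprn_gt0 ?invr_gt0 //.
  rewrite invf_div; apply: ltW; apply: (lt_le_trans (truncnS_gt _)).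
  rewrite -natrX ler_nat; exact: ltnW (ltn_expl _ _).
case: (ex_minnP exP) => n Pn nmin.
have n0 : (0 < n)%N.
  case: n Pn nmin => // Pn _; move: Pn; rewrite /P expr0 invr1; lra.
have tq : q < 8 * ((2 : R) ^+ n)^-1.
  case: n n0 Pn nmin => // n _ Pn nmin.
  have : ~~ P n by apply/negP => /nmin; rewrite ltnn.
  rewrite /P -ltNge exprS invfM.
  have : 0 < ((2 : R) ^+ n)^-1 by rewrite invr_gt0 exprn_gt0.
  lra.
move: Pn tq; rewrite /P; set t := ((2 : R) ^+ n)^-1 => tP tq.
have t0 : 0 < t by rewrite invr_gt0 exprn_gt0.
pose x := q * (1 - 3 / 2 * eps) / (t * eps).
have te0 : 0 < t * eps by rewrite mulr_gt0.
have x0 : 0 <= x.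
  rewrite /x; apply: divr_ge0; last exact: ltW.
  apply: mulr_ge0; lra.
have := truncn_itv x0; set j := Num.trunc x => /andP[jx xj].
have jx' : j%:R * (t * eps) <= q * (1 - 3 / 2 * eps).
  by rewrite -ler_pdivlMr.
have xj' : q * (1 - 3 / 2 * eps) < (j%:R + 1) * (t * eps).
  by rewrite -ltr_pdivrMr // natr1.
exists (t * eps * j%:R).
have e2 : 0 < eps * q by rewrite mulr_gt0.
have e3 : eps * t <= eps * (q / 4) by rewrite ler_pM2l.
have hz : q <= (1 + 2 * eps) * (t * eps * j%:R).
  have e4 : 0 <= eps * eps * q by apply/ltW; rewrite !mulr_gt0.
  have e5 : eps * (eps * t) <= eps * (eps * (q / 4)) by rewrite ler_pM2l.
  nra.
have hj : (0 < j)%N.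
  have : 1 <= x.
    rewrite /x ler_pdivlMr // mul1r. nra.
  by rewrite -truncn_gt0.
split; [split|split].
- exists n%:Z, j; split; first by [].
  split; last by rewrite -exprnN.
  rewrite lerBrDr ler_pdivlMr ?exprn_gt0 // -natr1.
  have : j%:R * eps < 8.
    rewrite -(ltr_pM2r t0).
    have -> : j%:R * eps * t = j%:R * (t * eps) by ring.
    lra.
  have : 0 <= j%:R * eps * eps.
    apply: mulr_ge0; last exact: ltW.
    apply: mulr_ge0 => //; exact: ltW.
  move=> h1 h2. have : j%:R * eps * eps <= 8 * eps.
    by apply: ltW; rewrite ltr_pM2r.
  nra.
- apply/andP; split; first by rewrite !mulr_gt0 // ltr0n.
  rewrite mulrC; lra.
- rewrite mulrC; lra.
- lra.
Qed.
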